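(* Let $(A,E,\langle\!\langle-,-\rangle\!\rangle,\partial,[\![-,-]\!])$ be a double Courant--Dorfman algebra. Then for all $e,f,g\in E$, $$\langle\!\langle e,[\![f,g]\!]\rangle\!\rangle_L-\langle\!\langle f,\partial\langle\!\langle e,g\rangle\!\rangle\rangle\!\rangle_R-\langle\!\langle[\![e,f]\!],g\rangle\!\rangle_L+\langle\!\langle\partial\langle\!\langle e,f\rangle\!\rangle,g\rangle\!\rangle_L=0\quad\text{in }A^{\otimes3}.$$
   Context: All algebras are associative unital $\Bbbk$-algebras, $\Bbbk$ a field of characteristic zero, $\otimes=\otimes_\Bbbk$. Sweedler notation: $x=x'\otimes x''$ with summation suppressed; $(x'\otimes x'')^\sigma=x''\otimes x'$. Outer structure on $A\otimes A$, $E\otimes A$, $A\otimes E$: $a(x'\otimes x'')b=ax'\otimes x''b$; inner structure on $A\otimes A$: $a*(x'\otimes x'')*b=x'b\otimes ax''$. For $x=x'\otimes x''$ and $y$: $x\otimes_1y:=x'\otimes y\otimes x''$, $y\otimes_1x:=x'\otimes y\otimes x''$. $A$ is an algebra, $E$ an $A$-bimodule, $\partial\colon A\to E$ a derivation, acting on $A\otimes A$ by $\partial(x'\otimes x'')=\partial x'\otimes x''+x'\otimes\partial x''\in E\otimes A\oplus A\otimes E$. A pairing $\langle\!\langle-,-\rangle\!\rangle\colon E\otimes E\to A\otimes A$ is linear with $f\mapsto\langle\!\langle e,f\rangle\!\rangle$ a bimodule map to $(A\otimes A)_{\mathrm{out}}$ and $f\mapsto\langle\!\langle f,e\rangle\!\rangle$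 a bimodule map to $(A\otimes A)_{\mathrm{inn}}$; symmetric: $\langle\!\langle e,f\rangle\!\rangle=\langle\!\langle f,e\rangle\!\rangle^\sigma$. Extensions to $A^{\otimes3}$-valued maps (additive in the tensor argument): $\langle\!\langle e,f\otimes a\rangle\!\rangle_L=\langle\!\langle e,f\rangle\!\rangle\otimes a$, $\langle\!\langle e,a\otimes f\rangle\!\rangle_L=0$, $\langle\!\langle e,a\otimes f\rangle\!\rangle_R=a\otimes\langle\!\langle e,f\rangle\!\rangle$, $\langle\!\langle e,f\otimes a\rangle\!\rangle_R=0$, $\langle\!\langle e\otimes a,f\rangle\!\rangle_L=\langle\!\langle a\otimes e,f\rangle\!\rangle_R=\langle\!\langle e,f\rangle\!\rangle'\otimes a\otimes\langle\!\langle e,f\rangle\!\rangle''$, $\langle\!\langle a\otimes e,f\rangle\!\rangle_L=\langle\!\langle e\otimes a,f\rangle\!\rangle_R=0$. A double Courant--Dorfman bracket is a linear map $[\![-,-]\!]\colon T_AE\otimes T_AE\to T_AE\otimes T_AE$ of degree $-1$ ($T_AE$ the tensor algebra, $E$ in degree 1) with $[\![e,a]\!]=\langle\!\langle e,\partial a\rangle\!\rangle$, $[\![a,e]\!]=-\langle\!\langle\partial a,e\rangle\!\rangle$, $[\![a,b]\!]=0$; for $e,f\in E$, $[\![e,f]\!]=[\![e,f]\!]_l+[\![e,f]\!]_r\in E\otimes A\oplus A\otimes E$. Extensions: $[\![e,f\otimes a]\!]_L=[\![e,f]\!]\otimes a$, $[\![e,a\otimes f]\!]_L=\langle\!\langle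 e,\partial a\rangle\!\rangle\otimes f$, $[\![e,f\otimes a]\!]_R=f\otimes\langle\!\langle e,\partial a\rangle\!\rangle$, $[\![e,a\otimes f]\!]_R=a\otimes[\![e,f]\!]$, $[\![e\otimes a,f]\!]_L=[\![e,f]\!]\otimes_1a+\langle\!\langle e,f\rangle\!\rangle\otimes_1\partial a$, $[\![a\otimes e,f]\!]_L=-\langle\!\langle\partial a,f\rangle\!\rangle\otimes_1e$. A double Courant--Dorfman algebra is $(A,E,\langle\!\langle-,-\rangle\!\rangle,\partial,[\![-,-]\!])$ with symmetric pairing, derivation and double Courant--Dorfman bracket such that for all $a,b\in A$, $e,f,g\in E$: $\partial\langle\!\langle e,f\rangle\!\rangle=[\![e,f]\!]+[\![f,e]\!]^\sigma$; $[\![\partial a,e]\!]=0$; $\langle\!\langle\partial a,\partial b\rangle\!\rangle=0$; $[\![e,fa]\!]=[\![e,f]\!]a+f\langle\!\langle e,\partial a\rangle\!\rangle$; $[\![e,af]\!]=a[\![e,f]\!]+\langle\!\langle e,\partial a\rangle\!\rangle f$; $[\![e,[\![f,g]\!]]\!]_L=[\![f,[\![e,g]\!]]\!]_R+[\![[\![e,f]\!],g]\!]_L$; $\langle\!\langle e,\partial\langle\!\langle f,g\rangle\!\rangle\rangle\!\rangle_L=\langle\!\langle f,[\![e,g]\!]\rangle\!\rangle_R+\langle\!\langle[\![e,f]\!],g\rangle\!\rangle_L$. *)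

(* Defs.v *)
(* Tensor products over the field K are given abstractly by
   their universal property (record [tensor]). *)
From HB Require Import structures.
From mathcomp Require Import all_boot all_order all_algebra.
Set Implicit Arguments. Unset Strict Implicit. Unset Printing Implicit Defensive.
Import GRing.Theory.
Local Open Scope ring_scope.

Definition klinear (K : fieldType) (U W : lmodType K) (f : U -> W) : Prop :=
  forall (k : K) (x y : U), f (k *: x + y) = k *: f x + f y.

Definition kbilinear (K : fieldType) (U V W : lmodType K) (f : U -> V -> W) : Prop :=
  (forall u, klinear (f u)) /\ (forall v, klinear (fun u => f u v)).

Record tensor (K : fieldType) (U V : lmodType K) := Tensor {
  tcarrier :> lmodType K;
  tmul : U -> V -> tcarrier;
  tmul_bilinear : kbilinear tmul;
  tlift : forall W : lmodType K, (U -> V -> W) -> tcarrier -> W;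
  tlift_linear : forall (W : lmodType K) (f : U -> V -> W),
      kbilinear f -> klinear (tlift f);
  tlift_tmul : forall (W : lmodType K) (f : U -> V -> W),
      kbilinear f -> forall u v, tlift f (tmul u v) = f u v;
  tmul_span : forall t : tcarrier,
      exists s : seq (U * V), t = \sum_(p <- s) tmul p.1 p.2 }.

Record bimodule (K : fieldType) (A : algType K) (E : lmodType K) := Bimodule {
  lact : A -> E -> E;
  ract : E -> A -> E;
  lact_bilinear : kbilinear (lact : (A : lmodType K) -> E -> E);
  ract_bilinear : kbilinear (ract : E -> (A : lmodType K) -> E);
  lact1 : forall e, lact 1 e = e;
  lactM : forall a b e, lact (a * b) e = lact a (lact b e);
  ract1 : forall e, ract e 1 = e;
  ractM : forall a b e, ract e (a * b) = ract (ract e a) b;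
  lact_ract : forall a b e, lact a (ract e b) = ract (lact a e) b }.

Record tensors (K : fieldType) (A : algType K) (E : lmodType K) := Tensors {
  TAA : tensor (A : lmodType K) (A : lmodType K);
  TEA : tensor E (A : lmodType K);
  TAE : tensor (A : lmodType K) E;
  TAAA : tensor TAA (A : lmodType K);
  TEAA : tensor TEA (A : lmodType K);
  TAEA : tensor TAE (A : lmodType K);
  TAAE : tensor TAA E }.

Arguments tlift {K U V} _ {W} _ _.
Arguments tmul {K U V} _ _ _.
Arguments lact {K A E} _ _ _.
Arguments ract {K A E} _ _ _.

Section Ops.
Variables (K : fieldType) (A : algType K) (E : lmodType K).
Variables (B : bimodule A E) (T : tensors A E).

Local Notation AA := (tcarrier (TAA T)).
Local Notation EA := (tcarrier (TEA T)).
Local Notation AE := (tcarrier (TAE T)).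
Local Notation AAA := (tcarrier (TAAA T)).
Local Notation EAA := (tcarrier (TEAA T)).
Local Notation AEA := (tcarrier (TAEA T)).
Local Notation AAE := (tcarrier (TAAE T)).
Local Notation "x ** y" := (tmul _ x y) (at level 40, left associativity).
Local Notation lift := (tlift _).

Definition tAAA (a b c : A) : AAA := tmul (TAAA T) (tmul (TAA T) a b) c.
Definition tEAA (e : E) (b c : A) : EAA := tmul (TEAA T) (tmul (TEA T) e b) c.
Definition tAEA (a : A) (e : E) (c : A) : AEA := tmul (TAEA T) (tmul (TAE T) a e) c.
Definition tAAE (a b : A) (e : E) : AAE := tmul (TAAE T) (tmul (TAA T) a b) e.

Definition sigAA : AA -> AA := tlift (TAA T) (fun a b => tmul (TAA T) b a).
Definition sigEA : EA -> AE := tlift (TEA T) (fun e a => tmul (TAE T) a e).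
Definition sigAE : AE -> EA := tlift (TAE T) (fun a e => tmul (TEA T) e a).
Definition sig2 (X : EA * AE) : EA * AE := (sigAE X.2, sigEA X.1).

Definition outAA (a : A) (x : AA) (b : A) : AA :=
  tlift (TAA T) (fun x1 x2 => tmul (TAA T) (a * x1) (x2 * b)) x.
Definition innAA (a : A) (x : AA) (b : A) : AA :=
  tlift (TAA T) (fun x1 x2 => tmul (TAA T) (x1 * b) (a * x2)) x.

Definition lmul2 (a : A) (X : EA * AE) : EA * AE :=
  (tlift (TEA T) (fun e c => tmul (TEA T) (lact B a e) c) X.1,
   tlift (TAE T) (fun c e => tmul (TAE T) (a * c) e) X.2).
Definition rmul2 (X : EA * AE) (a : A) : EA * AE :=
  (tlift (TEA T) (fun e c => tmul (TEA T) e (c * a)) X.1,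
   tlift (TAE T) (fun c e => tmul (TAE T) c (ract B e a)) X.2).
Definition EmulAA (f : E) (x : AA) : EA :=
  tlift (TAA T) (fun x1 x2 => tmul (TEA T) (ract B f x1) x2) x.
Definition AAmulE (x : AA) (f : E) : AE :=
  tlift (TAA T) (fun x1 x2 => tmul (TAE T) x1 (lact B x2 f)) x.

Variable d : A -> E.
Variable pr : E -> E -> AA.
Variable br : E -> E -> EA * AE.

Definition d2 (x : AA) : EA * AE :=
  (tlift (TAA T) (fun x1 x2 => tmul (TEA T) (d x1) x2) x,
   tlift (TAA T) (fun x1 x2 => tmul (TAE T) x1 (d x2)) x).

(* <<e, X>>_L, <<e, X>>_R, <<X, f>>_L, <<X, f>>_R for X in E(x)A (+) A(x)E *)
Definition pairL2 (e : E) (X : EA * AE) : AAA :=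
  tlift (TEA T) (fun f a => tmul (TAAA T) (pr e f) a) X.1.
Definition pairR2 (e : E) (X : EA * AE) : AAA :=
  tlift (TAE T) (fun a f => tlift (TAA T) (fun x1 x2 => tAAA a x1 x2) (pr e f)) X.2.
Definition pairL1 (X : EA * AE) (f : E) : AAA :=
  tlift (TEA T) (fun e a => tlift (TAA T) (fun x1 x2 => tAAA x1 a x2) (pr e f)) X.1.
Definition pairR1 (X : EA * AE) (f : E) : AAA :=
  tlift (TAE T) (fun a e => tlift (TAA T) (fun x1 x2 => tAAA x1 a x2) (pr e f)) X.2.

(* degree-1 part of T_AE^{(x)3}: E(x)A(x)A (+) A(x)E(x)A (+) A(x)A(x)E *)
Definition triple := ((EAA * AEA) * AAE)%type.

Definition brL2 (e : E) (X : EA * AE) : triple :=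
  (tlift (TEA T) (fun f a => tmul (TEAA T) (br e f).1 a) X.1,
   tlift (TEA T) (fun f a => tmul (TAEA T) (br e f).2 a) X.1,
   tlift (TAE T) (fun a f => tmul (TAAE T) (pr e (d a)) f) X.2).
Definition brR2 (e : E) (X : EA * AE) : triple :=
  (tlift (TEA T) (fun f a =>
      tlift (TAA T) (fun x1 x2 => tEAA f x1 x2) (pr e (d a))) X.1,
   tlift (TAE T) (fun a f =>
      tlift (TEA T) (fun f' b => tAEA a f' b) (br e f).1) X.2,
   tlift (TAE T) (fun a f =>
      tlift (TAE T) (fun b f' => tAAE a b f') (br e f).2) X.2).
(* [[X, f]]_L, using  x (x)_1 y = x' (x) y (x) x'' *)
Definition brL1 (X : EA * AE) (g : E) : triple :=
  (tlift (TEA T) (fun e a =>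
      tlift (TEA T) (fun x1 x2 => tEAA x1 a x2) (br e g).1) X.1,
   tlift (TEA T) (fun e a =>
      tlift (TAA T) (fun x1 x2 => tAEA x1 (d a) x2) (pr e g)) X.1
   - tlift (TAE T) (fun a e =>
      tlift (TAA T) (fun x1 x2 => tAEA x1 e x2) (pr (d a) g)) X.2,
   tlift (TEA T) (fun e a =>
      tlift (TAE T) (fun x1 x2 => tAAE x1 a x2) (br e g).2) X.1).

End Ops.

(* Double Courant--Dorfman algebra (A, E, <<-,->>, d, [[-,-]]).
   The bracket [[e,f]] (e, f in E) is  br e f = ([[e,f]]_l, [[e,f]]_r). *)
Record is_DCD_algebra (K : fieldType) (A : algType K) (E : lmodType K)
    (B : bimodule A E) (T : tensors A E)
    (d : A -> E) (pr : E -> E -> tcarrier (TAA T))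
    (br : E -> E -> (tcarrier (TEA T) * tcarrier (TAE T))%type) : Prop := {
  d_linear : klinear (d : (A : lmodType K) -> E);
  d_leibniz : forall a b, d (a * b) = ract B (d a) b + lact B a (d b);
  pr_bilinear : kbilinear pr;
  pr_outer : forall e f a b, pr e (lact B a (ract B f b)) = outAA a (pr e f) b;
  pr_inner : forall e f a b, pr (lact B a (ract B f b)) e = innAA a (pr f e) b;
  pr_sym : forall e f, pr e f = sigAA (pr f e);
  br_bilinear : kbilinear br;
  ax_d_pr : forall e f, d2 d (pr e f) = br e f + sig2 (br f e);
  ax_br_d : forall a e, br (d a) e = 0;
  ax_pr_dd : forall a b, pr (d a) (d b) = 0;
  ax_br_r : forall e f a,
      br e (ract B f a) = rmul2 B (br e f) a + (EmulAA B f (pr e (d a)), 0);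
  ax_br_l : forall e f a,
      br e (lact B a f) = lmul2 B a (br e f) + (0, AAmulE B (pr e (d a)) f);
  ax_jacobi : forall e f g,
      brL2 d pr br e (br f g) = brR2 d pr br f (br e g) + brL1 d pr br (br e f) g;
  ax_pr_br : forall e f g,
      pairL2 pr e (d2 d (pr f g)) = pairR2 pr f (br e g) + pairL1 pr (br e f) g }.

(* Main.v *)
Require Import Defs.
From HB Require Import structures.
From mathcomp Require Import all_boot all_order all_algebra.
Set Implicit Arguments. Unset Strict Implicit. Unset Printing Implicit Defensive.
Import GRing.Theory.
Local Open Scope ring_scope.

Section Gen.
Variable K : fieldType.
Implicit Types U V W X : lmodType K.

Lemma klin0 U W (f : U -> W) : klinear f -> f 0 = 0.
Proof.
move=> h; have := h 1 0 0; rewrite scaler0 add0r scale1r => /eqP.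
by rewrite -subr_eq0 opprD addrA subrr add0r oppr_eq0 => /eqP.
Qed.

Lemma klinD U W (f : U -> W) : klinear f -> forall x y, f (x + y) = f x + f y.
Proof. by move=> h x y; have := h 1 x y; rewrite !scale1r. Qed.

Lemma klinN U W (f : U -> W) : klinear f -> forall x, f (- x) = - f x.
Proof.
move=> h x; have := h (-1) x 0; rewrite addr0 (klin0 h) addr0 !scaleN1r //.
Qed.

Lemma klinB U W (f : U -> W) : klinear f -> forall x y, f (x - y) = f x - f y.
Proof. by move=> h x y; rewrite (klinD h) (klinN h). Qed.

Lemma klin_sum U W (f : U -> W) I (s : seq I) (F : I -> U) : klinear f ->
  f (\sum_(i <- s) F i) = \sum_(i <- s) f (F i).
Proof.
move=> h; elim: s => [|i s IH]; first by rewrite !big_nil (klin0 h).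
by rewrite !big_cons (klinD h) IH.
Qed.

Lemma klin_comp U V W (f : V -> W) (g : U -> V) :
  klinear f -> klinear g -> klinear (fun x => f (g x)).
Proof. by move=> hf hg k x y; rewrite hg hf. Qed.

Lemma text U V W (t : tensor U V) (F G : t -> W) : klinear F -> klinear G ->
  (forall u v, F (tmul t u v) = G (tmul t u v)) -> forall x, F x = G x.
Proof.
move=> hF hG h x; have [s ->] := tmul_span x.
rewrite (klin_sum _ _ hF) (klin_sum _ _ hG); apply: eq_bigr => p _; exact: h.
Qed.

Lemma tlift_param U V W X (t : tensor U V) (G : X -> U -> V -> W) :
  (forall x, kbilinear (G x)) -> (forall u v, klinear (fun x => G x u v)) ->
  forall y, klinear (fun x => tlift t (G x) y).
Proof.
move=> hb hl y k x x'; have [s ->] := tmul_span y.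
have L := fun x => @tlift_linear _ _ _ t _ _ (hb x).
rewrite !(klin_sum _ _ (L _)).
rewrite scaler_sumr -big_split; apply: eq_bigr => p _.
by rewrite !tlift_tmul // hl.
Qed.

Lemma tmul_l U V (t : tensor U V) v : klinear (fun u => tmul t u v).
Proof. exact: (proj2 (tmul_bilinear t)). Qed.
Lemma tmul_r U V (t : tensor U V) u : klinear (tmul t u).
Proof. exact: (proj1 (tmul_bilinear t)). Qed.

End Gen.

Section Main.
Variables (K : fieldType) (A : algType K) (E : lmodType K) (B : bimodule A E) (T : tensors A E).
Variables (d : A -> E) (pr : E -> E -> tcarrier (TAA T)).
Hypothesis prL : forall u, klinear (pr u).
Hypothesis prR : forall v, klinear (fun u => pr u v).
Hypothesis prS : forall e f, pr e f = sigAA (pr f e).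

Lemma bil_tAAA_perm1 c : kbilinear (fun a b : A => tAAA T b c a).
Proof.
split=> [a|b]; rewrite /tAAA.
- exact: (klin_comp (tmul_l _ _) (tmul_l _ _)).
- exact: tmul_r.
Qed.

Definition piA (u : tcarrier (TAA T)) (c : A) : tcarrier (TAAA T) :=
  tlift (TAA T) (fun a b : A => tAAA T b c a) u.

Lemma piA_bil : kbilinear piA.
Proof.
split=> [u|c].
- apply: (tlift_param (t := TAA T) (G := fun c a b => tAAA T b c a)).
    exact: bil_tAAA_perm1.
  move=> a b; rewrite /tAAA.
  exact: (klin_comp (tmul_l _ _) (tmul_r _ _)).
- exact: tlift_linear (bil_tAAA_perm1 c).
Qed.

Definition pi : tcarrier (TAAA T) -> tcarrier (TAAA T) := tlift (TAAA T) piA.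

Lemma pi_lin : klinear pi.
Proof. exact: tlift_linear piA_bil. Qed.

Lemma pi_t a b c : pi (tAAA T a b c) = tAAA T b c a.
Proof.
rewrite /pi /tAAA (tlift_tmul _ piA_bil) /piA.
by rewrite (tlift_tmul _ (bil_tAAA_perm1 c)).
Qed.


Lemma bil_sigAA : kbilinear (fun a b : A => tmul (TAA T) b a).
Proof. split=> [a|b]; [exact: tmul_l | exact: tmul_r]. Qed.
Lemma bil_sigAE : kbilinear (fun (a : A) (e : E) => tmul (TEA T) e a).
Proof. split=> [a|b]; [exact: tmul_l | exact: tmul_r]. Qed.
Lemma bil_sigEA : kbilinear (fun (e : E) (a : A) => tmul (TAE T) a e).
Proof. split=> [a|b]; [exact: tmul_l | exact: tmul_r]. Qed.

Lemma lin_sigAA : klinear (sigAA (T:=T)).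
Proof. exact: tlift_linear bil_sigAA. Qed.
Lemma lin_sigAE : klinear (sigAE (T:=T)).
Proof. exact: tlift_linear bil_sigAE. Qed.
Lemma lin_sigEA : klinear (sigEA (T:=T)).
Proof. exact: tlift_linear bil_sigEA. Qed.

Lemma bil_FL2 e : kbilinear (fun (f : E) (a : A) => tmul (TAAA T) (pr e f) a).
Proof. split=> [f|a]; [exact: tmul_r | exact: klin_comp (tmul_l _ _) (prL e)]. Qed.

Lemma bil_in1 (a : A) : kbilinear (fun x1 x2 : A => tAAA T a x1 x2).
Proof. split=> [x1|x2]; rewrite /tAAA; [exact: tmul_r | exact: klin_comp (tmul_l _ _) (tmul_r _ _)]. Qed.
Lemma bil_in2 (a : A) : kbilinear (fun x1 x2 : A => tAAA T x1 a x2).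
Proof. split=> [x1|x2]; rewrite /tAAA; [exact: tmul_r | exact: klin_comp (tmul_l _ _) (tmul_l _ _)]. Qed.

Lemma bil_FR2 e : kbilinear (fun (a : A) (f : E) =>
   tlift (TAA T) (fun x1 x2 => tAAA T a x1 x2) (pr e f)).
Proof.
split=> [a|f].
- exact: klin_comp (tlift_linear (bil_in1 a)) (prL e).
- apply: (tlift_param (t := TAA T) (G := fun a x1 x2 => tAAA T a x1 x2)).
    exact: bil_in1.
  move=> x1 x2; rewrite /tAAA; exact: klin_comp (tmul_l _ _) (tmul_l _ _).
Qed.

Lemma bil_FL1 f : kbilinear (fun (e : E) (a : A) =>
   tlift (TAA T) (fun x1 x2 => tAAA T x1 a x2) (pr e f)).
Proof.
split=> [e|a].
- apply: (tlift_param (t := TAA T) (G := fun a x1 x2 => tAAA T x1 a x2)).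
    exact: bil_in2.
  move=> x1 x2; rewrite /tAAA; exact: klin_comp (tmul_l _ _) (tmul_r _ _).
- exact: klin_comp (tlift_linear (bil_in2 a)) (prR f).
Qed.

Lemma L1 g (X : tcarrier (TEA T) * tcarrier (TAE T)) : pi (pairL2 pr g X) = pairL1 pr X g.
Proof.
rewrite /pairL2 /pairL1; move: (X.1); apply: text.
- exact: klin_comp pi_lin (tlift_linear (bil_FL2 g)).
- exact: tlift_linear (bil_FL1 g).
move=> h a; rewrite !tlift_tmul; [|exact: bil_FL1|exact: bil_FL2].
rewrite prS; move: (pr h g); apply: text.
- exact: klin_comp pi_lin (klin_comp (tmul_l _ _) lin_sigAA).
- exact: tlift_linear (bil_in2 a).
move=> x1 x2; rewrite /sigAA !tlift_tmul; [|exact: bil_in2|exact: bil_sigAA].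
by rewrite -/(tAAA T x2 x1 a) pi_t.
Qed.

Lemma L2 e (X : tcarrier (TEA T) * tcarrier (TAE T)) : pi (pairR2 pr e X) = pairL2 pr e (sig2 X).
Proof.
rewrite /pairR2 /pairL2 /=; move: (X.2); apply: text.
- exact: klin_comp pi_lin (tlift_linear (bil_FR2 e)).
- exact: klin_comp (tlift_linear (bil_FL2 e)) lin_sigAE.
move=> a f; rewrite /sigAE !tlift_tmul; [|exact: bil_FL2|exact: bil_sigAE|exact: bil_FR2].
move: (pr e f); apply: text.
- exact: klin_comp pi_lin (tlift_linear (bil_in1 a)).
- exact: tmul_l.
move=> x1 x2; rewrite !tlift_tmul; last exact: bil_in1.
by rewrite pi_t.
Qed.

Lemma L3 f (X : tcarrier (TEA T) * tcarrier (TAE T)) : pi (pairL1 pr X f) = pairR2 pr f (sig2 X).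
Proof.
rewrite /pairR2 /pairL1 /=; move: (X.1); apply: text.
- exact: klin_comp pi_lin (tlift_linear (bil_FL1 f)).
- exact: klin_comp (tlift_linear (bil_FR2 f)) lin_sigEA.
move=> h a; rewrite /sigEA !tlift_tmul; [|exact: bil_FR2|exact: bil_sigEA|exact: bil_FL1].
rewrite (prS f h); move: (pr h f); apply: text.
- exact: klin_comp pi_lin (tlift_linear (bil_in2 a)).
- exact: klin_comp (tlift_linear (bil_in1 a)) lin_sigAA.
move=> x1 x2; rewrite /sigAA !tlift_tmul; [|exact: bil_in1|exact: bil_sigAA|exact: bil_in2].
by rewrite pi_t.
Qed.

End Main.

Lemma zid (V : zmodType) (P R M Q : V) : P + R - M - P - Q - R + M + Q = 0.
Proof.
rewrite -[_ - R]addrAC -[_ - Q]addrAC -[_ - P]addrAC.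
rewrite [P + R]addrC addrK -[_ - R]addrAC -[_ - R]addrAC subrr add0r.
by rewrite [- M - Q + M]addrAC addNr add0r addNr.
Qed.

Theorem lemmaA1 (K : fieldType) (charK0 : [pchar K] =i pred0)
    (A : algType K) (E : lmodType K) (B : bimodule A E) (T : tensors A E)
    (d : A -> E) (pr : E -> E -> tcarrier (TAA T))
    (br : E -> E -> (tcarrier (TEA T) * tcarrier (TAE T))%type)
    (HD : is_DCD_algebra B d pr br) (e f g : E) :
  pairL2 pr e (br f g) - pairR2 pr f (d2 d (pr e g))
    - pairL1 pr (br e f) g + pairL1 pr (d2 d (pr e f)) g = 0.
Proof.
have prL := proj1 (pr_bilinear HD).
have prR := proj2 (pr_bilinear HD).
have prS := pr_sym HD.
have L2D : forall e X Y, pairL2 pr e (X + Y) = pairL2 pr e X + pairL2 pr e Y.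
  by move=> e' X Y; rewrite /pairL2 /= (klinD (tlift_linear (bil_FL2 prL e'))).
have R2D : forall e X Y, pairR2 pr e (X + Y) = pairR2 pr e X + pairR2 pr e Y.
  by move=> e' X Y; rewrite /pairR2 /= (klinD (tlift_linear (bil_FR2 prL e'))).
have J1 := ax_pr_br HD e f g.
have J2 := ax_pr_br HD g e f.
rewrite (ax_d_pr HD f g) L2D in J1.
have S : pairL1 pr (d2 d (pr e f)) g
   = pairL2 pr e (sig2 (br g f)) + pairR2 pr f (sig2 (br g e)).
  by rewrite -(L1 prL prR prS) J2 (klinD (@pi_lin _ _ _ T)) (L2 prL) (L3 prL prR prS).
rewrite S (ax_d_pr HD e g) R2D.
have -> : pairL2 pr e (br f g) = pairR2 pr f (br e g) + pairL1 pr (br e f) g - pairL2 pr e (sig2 (br g f)).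
  by rewrite -J1 addrK.
set P := pairR2 pr f (br e g); set Q := pairR2 pr f (sig2 (br g e)).
set R := pairL1 pr (br e f) g; set M := pairL2 pr e (sig2 (br g f)).
rewrite !opprD !addrA; exact: zid.
Qed.
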